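(* Let $1\le p\le q$, $n=p+q$, and let $\mu=(a_1,\dots,a_p\mid b_1,\dots,b_q)\in\mathbb{Z}^n$ be $\Delta^+(\mathfrak{k},\mathfrak{t})$-dominant with $\mu-\beta$ also $\Delta^+(\mathfrak{k},\mathfrak{t})$-dominant. If $a_1\ge q+1$ and $b_1\ge p+1$, then $\{\mu-\tau\}\gg\{\mu-\tau-\beta\}$ for every $\tau\in\Omega_{p,q}$, and consequently $\|\mu\|_{\mathrm{spin}}>\|\mu-\beta\|_{\mathrm{spin}}$.
   Context: Weights are vectors in $\mathbb{R}^n$ written $(x_1,\dots,x_p\mid y_1,\dots,y_q)$, Euclidean norm $\|\cdot\|$. $\rho_c=(p,\dots,1\mid q,\dots,1)$, $\beta=(1,0,\dots,0\mid1,0,\dots,0)$. $\Delta^+(\mathfrak{k},\mathfrak{t})$-dominant means $x_1\ge\cdots\ge x_p\ge0$, $y_1\ge\cdots\ge y_q\ge0$. For $\nu\in\mathbb{Z}^n$, $\{\nu\}$ is obtained by taking absolute values of all coordinates and sorting the first $p$ and last $q$ coordinates separately in decreasing order; $\|\nu\|_{\mathfrak{k}}=\|\{\nu\}+\rho_c\|$. $u\gg v$ means $u_i\ge v_i$ for all $i$ with strict inequality for some $i$. $\Omega_{p,q}$ is the set of $(x\mid y)\in\mathbb{Z}^n$ with $q\ge x_1\ge\cdots\ge x_p\ge0$ and $y_j=\#\{i\mid q-x_i\ge j\}$ ($1\le j\le q$). $\|\nu\|_{\mathrm{spin}}=\min_{\tau\in\Omega_{p,q}}\|\nu-\tau\|_{\mathfrak{k}}$.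 *)

(* Defs.v *)
(* Weights in Z^n, n = p+q, are pairs (x, y) of integer
   sequences: x = first p coordinates, y = last q coordinates. *)
From HB Require Import structures.
From mathcomp Require Import all_boot all_order all_algebra.
Set Implicit Arguments. Unset Strict Implicit. Unset Printing Implicit Defensive.
Import Order.TTheory GRing.Theory Num.Theory.
Local Open Scope ring_scope.

Definition weight := (seq int * seq int)%type.

Definition vsub (s t : seq int) : seq int := [seq z.1 - z.2 | z <- zip s t].
Definition wsub (u v : weight) : weight := (vsub u.1 v.1, vsub u.2 v.2).
Definition vadd (s t : seq int) : seq int := [seq z.1 + z.2 | z <- zip s t].
Definition wadd (u v : weight) : weight := (vadd u.1 v.1, vadd u.2 v.2).

Definition rho_c (p q : nat) : weight :=
  ([seq (i%:Z) | i <- rev (iota 1 p)], [seq (i%:Z) | i <- rev (iota 1 q)]).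

Definition beta (p q : nat) : weight :=
  (1 :: nseq p.-1 0, 1 :: nseq q.-1 0).

Definition dominant_seq (s : seq int) : bool :=
  sorted (fun a b : int => b <= a) s && all (fun a : int => 0 <= a) s.
Definition dominant (u : weight) : bool := dominant_seq u.1 && dominant_seq u.2.

Definition sort_abs (s : seq int) : seq int :=
  sort (fun a b : int => b <= a) [seq (`|z|)%:Z | z <- s].
Definition brace (u : weight) : weight := (sort_abs u.1, sort_abs u.2).

Definition gg (u v : weight) : bool :=
  let s := u.1 ++ u.2 in let t := v.1 ++ v.2 in
  [&& size s == size t,
      all (fun z : int * int => z.2 <= z.1) (zip s t) &
      has (fun z : int * int => z.2 < z.1) (zip s t)].

Definition enorm (R : rcfType) (u : weight) : R :=
  Num.sqrt ((\sum_(z <- u.1 ++ u.2) z ^+ 2)%:~R).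

Definition knorm (R : rcfType) (p q : nat) (nu : weight) : R :=
  enorm R (wadd (brace nu) (rho_c p q)).

Definition omega_y (q : nat) (x : seq int) : seq int :=
  [seq (count (fun xi : int => j%:Z <= q%:Z - xi) x)%:Z | j <- iota 1 q].

Definition in_Omega (p q : nat) (tau : weight) : Prop :=
  [/\ size tau.1 = p,
      sorted (fun a b : int => b <= a) tau.1,
      all (fun a : int => (0 <= a) && (a <= q%:Z)) tau.1
    & tau.2 = omega_y q tau.1].

Definition tau_of (p q : nat) (x : p.-tuple 'I_q.+1) : weight :=
  let xs := [seq (val i)%:Z | i <- x] in (xs, omega_y q xs).

Definition tau0 (p q : nat) : weight :=
  (nseq p 0, omega_y q (nseq p 0)).

(* ||nu||_spin = min_{tau in Omega_{p,q}} ||nu - tau||_k, the minimum being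
   taken over the finite enumeration of Omega_{p,q} by nonincreasing
   x in {0..q}^p (tau0 is a member, so it is a harmless initial value). *)
Definition spin_norm (R : rcfType) (p q : nat) (nu : weight) : R :=
  \big[Num.min/knorm R p q (wsub nu (tau0 p q))]_(x : p.-tuple 'I_q.+1 |
      sorted (fun a b : 'I_q.+1 => (b <= a)%N) x)
    knorm R p q (wsub nu (tau_of x)).

(* Main.v *)
Require Import Defs.
From HB Require Import structures.
From mathcomp Require Import all_boot all_order all_algebra.
From mathcomp Require Import zify ring lra.
Import Order.TTheory GRing.Theory Num.Theory.
Local Open Scope ring_scope.

Definition geZ := fun a b : int => b <= a.

Fixpoint ins (x : int) (s : seq int) : seq int :=
  match s with
  | [::] => [:: x]
  | h :: t => if h <= x then x :: s else h :: ins x t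
  end.

Lemma ins_perm x s : perm_eq (ins x s) (x :: s).
Proof.
elim: s => [|h t IH] //=; case: ifP => _ //.
apply: (perm_trans (_ : perm_eq _ (h :: x :: t))); first by rewrite perm_cons.
by rewrite -[x :: h :: t]/([:: x] ++ h :: t) -[h :: x :: t]/([:: h] ++ [:: x] ++ t) perm_catCA.
Qed.

Lemma ins_path h s x : path geZ h s -> x <= h -> path geZ h (ins x s).
Proof.
elim: s h => [|k t IH] h /=; first by rewrite /geZ andbT.
move=> /andP[hk pk] xh; case: ifP => kx /=.
  by rewrite /geZ xh kx.
rewrite hk IH //; rewrite /geZ in kx *; lia.
Qed.

Lemma ins_sorted x s : sorted geZ s -> sorted geZ (ins x s).
Proof.
case: s => [|k t] //= pk; case: ifP => kx /=; first by rewrite {1}/geZ kx.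
apply: ins_path => //; rewrite /geZ; lia.
Qed.

Lemma geZ_trans : transitive geZ.
Proof. move=> a b c; rewrite /geZ; lia. Qed.
Lemma geZ_anti : antisymmetric geZ.
Proof. move=> a b; rewrite /geZ => /andP[]; lia. Qed.
Lemma geZ_total : total geZ.
Proof. move=> a b; rewrite /geZ; lia. Qed.

Lemma sort_cons x r : sort geZ (x :: r) = ins x (sort geZ r).
Proof.
apply: (sorted_eq geZ_trans geZ_anti).
- exact: sort_sorted geZ_total _.
- apply: ins_sorted; exact: sort_sorted geZ_total _.
- rewrite (perm_sort geZ (x :: r)) perm_sym.
  apply: (perm_trans (ins_perm _ _)).
  by rewrite perm_cons (perm_sort geZ r).
Qed.

Definition LE (u v : seq int) := all2 (fun a b : int => b <= a) u v.

Lemma LE_refl s : LE s s.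
Proof. by elim: s => //= h t ->; rewrite lexx. Qed.

Lemma LE_ins_head s h y : path geZ h s -> y <= h -> LE (h :: s) (ins y s).
Proof.
elim: s h => [|k t IH] h /=; first by rewrite andbT.
move=> /andP[hk pk] yh; case: ifP => ky /=.
  by rewrite yh lexx LE_refl.
move: hk; rewrite /geZ => ->; apply: IH => //; lia.
Qed.

Lemma LE_ins s x y : sorted geZ s -> y <= x -> LE (ins x s) (ins y s).
Proof.
elim: s => [|h t IH] /=; first by move=> _ ->.
move=> pt yx; case: ifP => hy; case: ifP => hx /=.
- by rewrite yx lexx LE_refl.
- rewrite hy; apply: LE_ins_head => //; rewrite /geZ; lia.
- lia.
- by rewrite lexx IH // (path_sorted pt).
Qed.

Lemma sum_ins x s : \sum_(z <- ins x s) z = x + \sum_(z <- s) z.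
Proof. by rewrite (perm_big _ (ins_perm x s)) big_cons. Qed.

Lemma vsub_nseq0 r k : size r = k -> vsub r (nseq k 0) = r.
Proof. by move<-; elim: r => //= h t IH; rewrite /vsub /= subr0; congr (_ :: _). Qed.

Lemma vsub_cons a s b t : vsub (a :: s) (b :: t) = (a - b) :: vsub s t.
Proof. by []. Qed.

Lemma sort_absE s : sort_abs s = sort geZ [seq (`|z|%N)%:Z | z <- s].
Proof. by []. Qed.

Lemma block s k : size s = k.+1 -> 1 <= head 0 s ->
  [/\ LE (sort_abs s) (sort_abs (vsub s (1 :: nseq k 0))),
      \sum_(z <- sort_abs (vsub s (1 :: nseq k 0))) z < \sum_(z <- sort_abs s) z,
      size (sort_abs s) = k.+1, size (sort_abs (vsub s (1 :: nseq k 0))) = k.+1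
    & all (fun z : int => 0 <= z) (sort_abs (vsub s (1 :: nseq k 0)))].
Proof.
case: s => [|c r] //= [Hr] Hc.
rewrite vsub_cons (vsub_nseq0 _ _ Hr) !sort_absE /= !sort_cons.
have e1 : (`|c|%N)%:Z = c by rewrite gez0_abs //; lia.
have e2 : (`|c - 1|%N)%:Z = c - 1 by rewrite gez0_abs //; lia.
rewrite e1 e2; split.
- apply: LE_ins; first exact: sort_sorted geZ_total _.
  lia.
- rewrite !sum_ins; lia.
- by rewrite (perm_size (ins_perm _ _)) /= size_sort size_map Hr.
- by rewrite (perm_size (ins_perm _ _)) /= size_sort size_map Hr.
- rewrite (perm_all _ (ins_perm _ _)) /= (perm_all _ (introT permPl (perm_sort _ _))).
  apply/andP; split; first lia.
  by apply/allP => z /mapP[w _ ->].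
Qed.

Lemma LE_sum u v : LE u v -> \sum_(z <- v) z <= \sum_(z <- u) z.
Proof.
elim: u v => [|h t IH] [|g w] //= /andP[gh Hw]; rewrite !big_cons.
by apply: lerD => //; apply: IH.
Qed.

Lemma LE_has u v : LE u v -> \sum_(z <- v) z < \sum_(z <- u) z ->
  has (fun z : int * int => z.2 < z.1) (zip u v).
Proof.
elim: u v => [|h t IH] [|g w] //=; rewrite ?big_nil ?ltxx //.
move=> /andP[gh Hw]; rewrite !big_cons => Hs.
case: (ltP g h) => //= hg; apply: IH => //.
rewrite -(ltrD2l h); apply: le_lt_trans Hs; by rewrite lerD2r.
Qed.

Lemma LE_all u v : LE u v -> all (fun z : int * int => z.2 <= z.1) (zip u v).
Proof. by elim: u v => [|h t IH] [|g w] //= /andP[-> /IH]. Qed.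

Lemma LE_size u v : LE u v -> size u = size v.
Proof. by elim: u v => [|h t IH] [|g w] //= /andP[_ /IH ->]. Qed.

Lemma gg_of u1 u2 v1 v2 : LE u1 v1 -> LE u2 v2 ->
  \sum_(z <- v1) z < \sum_(z <- u1) z -> gg (u1, u2) (v1, v2).
Proof.
move=> H1 H2 Hs; rewrite /gg /= !size_cat (LE_size _ _ H1) (LE_size _ _ H2) eqxx /=.
rewrite zip_cat ?(LE_size _ _ H1) // all_cat has_cat !LE_all //=.
by rewrite LE_has.
Qed.

Definition sumsq (s : seq int) : int := \sum_(z <- s) z ^+ 2.

Lemma sq_le u v w : LE u v -> all (fun z : int => 0 <= z) v ->
  all (fun z : int => 0 <= z) w -> sumsq (vadd v w) <= sumsq (vadd u w).
Proof.
rewrite /sumsq.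
elim: u v w => [|h t IH] [|g s] [|e w] //=; rewrite /vadd /= ?big_nil //.
move=> /andP[gh Hs] /andP[g0 Hg] /andP[e0 He]; rewrite !big_cons.
apply: lerD; last exact: IH.
nia.
Qed.

Lemma sq_lt u v w : LE u v -> \sum_(z <- v) z < \sum_(z <- u) z ->
  all (fun z : int => 0 <= z) v ->
  all (fun z : int => 0 <= z) w -> size w = size u ->
  sumsq (vadd v w) < sumsq (vadd u w).
Proof.
rewrite /sumsq.
elim: u v w => [|h t IH] [|g s] [|e w] //=; rewrite /vadd /= ?big_nil ?ltxx //.
move=> /andP[gh Hs] Hsum /andP[g0 Hg] /andP[e0 He] [Hsz]; rewrite !big_cons.
move: Hsum; rewrite !big_cons => Hsum.
case: (ltP g h) => hg.
  apply: ltr_leD; first nia.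
  exact: (sq_le _ _ _ Hs Hg He).
apply: ler_ltD; first nia.
apply: IH => //; rewrite -(ltrD2l h); apply: le_lt_trans Hsum; by rewrite lerD2r.
Qed.

Lemma vsub_comm a b c : vsub (vsub a b) c = vsub (vsub a c) b.
Proof.
elim: a b c => [|x a IH] [|y b] [|z c] //.
rewrite !vsub_cons IH; congr (_ :: _); ring.
Qed.

Lemma wsub_comm u v w : wsub (wsub u v) w = wsub (wsub u w) v.
Proof. by case: u v w => [u1 u2] [v1 v2] [w1 w2]; rewrite /wsub /= (vsub_comm u1 v1) (vsub_comm u2 v2). Qed.

Lemma Omega_tau0 p q : in_Omega p q (tau0 p q).
Proof.
split => //=; first by rewrite size_nseq.
  by elim: p => //= -[|p] //=.
rewrite all_nseq; apply/orP; right; lia.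
Qed.

Lemma Omega_tau_of p q (x : p.-tuple 'I_q.+1) :
  sorted (fun a b : 'I_q.+1 => (b <= a)%N) x -> in_Omega p q (tau_of x).
Proof.
move=> Hx; split => //=.
- by rewrite size_map size_tuple.
- rewrite sorted_map; apply: sub_sorted Hx => i j /=; by rewrite lez_nat.
- rewrite all_map; apply/allP => i _ /=; rewrite lez_nat; have := ltn_ord i; lia.
Qed.

Lemma rho_ok k : size [seq (i%:Z) | i <- rev (iota 1 k)] = k /\
  all (fun z : int => 0 <= z) [seq (i%:Z) | i <- rev (iota 1 k)].
Proof.
split; first by rewrite size_map size_rev size_iota.
by rewrite all_map; apply/allP => i _ /=.
Qed.


Lemma size_vsub s t : size (vsub s t) = minn (size s) (size t).
Proof. by rewrite /vsub size_map size_zip. Qed.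

Lemma blockA p q (a x : seq int) : (1 <= p)%N -> size a = p -> size x = p ->
  (q.+1)%:Z <= nth 0 a 0 -> all (fun a : int => (0 <= a) && (a <= q%:Z)) x ->
  size (vsub a x) = p.-1.+1 /\ 1 <= head 0 (vsub a x).
Proof.
move=> Hp Ha Hx H1 Hall; rewrite size_vsub Ha Hx minnn prednK //; split => //.
case: a Ha H1 => [|a1 a'] Ha H1; first by rewrite -Ha in Hp.
case: x Hx Hall => [|x1 x'] Hx Hall; first by rewrite -Hx in Hp.
move: Hall; rewrite vsub_cons /= => /andP[/andP[_ H2] _].
move: H1; rewrite /=; lia.
Qed.

Lemma blockB p q (b x : seq int) : (1 <= p)%N -> (p <= q)%N -> size b = q -> size x = p ->
  (p.+1)%:Z <= nth 0 b 0 ->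
  size (vsub b (omega_y q x)) = q.-1.+1 /\ 1 <= head 0 (vsub b (omega_y q x)).
Proof.
move=> Hp Hpq Hb Hx H1.
have Hq : (0 < q)%N by apply: leq_trans Hpq.
rewrite size_vsub Hb /omega_y size_map size_iota minnn prednK //; split => //.
case: q Hq Hpq Hb H1 => [|q'] // _ Hpq Hb H1.
case: b Hb H1 => [|b1 b'] // Hb /= H1.
have := count_size (fun xi : int => (1%:Z <= q'.+1%:Z - xi)) x.
rewrite Hx; lia.
Qed.

Lemma knorm_gg (R : rcfType) p q (s1 s2 : seq int) : (0 < p)%N -> (0 < q)%N ->
  size s1 = p.-1.+1 -> 1 <= head 0 s1 -> size s2 = q.-1.+1 -> 1 <= head 0 s2 ->
  gg (brace (s1, s2)) (brace (wsub (s1, s2) (beta p q))) /\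
  knorm R p q (wsub (s1, s2) (beta p q)) < knorm R p q (s1, s2).
Proof.
move=> Hp Hq H1 h1 H2 h2.
have [L1 S1 U1 V1 A1] := block s1 (p.-1) H1 h1.
have [L2 S2 U2 V2 A2] := block s2 (q.-1) H2 h2.
split; first exact: gg_of.
rewrite /knorm /enorm /= !big_cat /=.
have [r1s r1a] := rho_ok p.
have [r2s r2a] := rho_ok q.
have T1 := sq_lt _ _ _ L1 S1 A1 r1a.
have T2 := sq_lt _ _ _ L2 S2 A2 r2a.
have e1 : size [seq (i%:Z) | i <- rev (iota 1 p)] = size (sort_abs s1) by rewrite r1s U1 prednK.
have e2 : size [seq (i%:Z) | i <- rev (iota 1 q)] = size (sort_abs s2) by rewrite r2s U2 prednK.
have {}T1 := T1 e1. have {}T2 := T2 e2.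
rewrite /sumsq in T1 T2.
have T := ltrD T1 T2.
rewrite ltr_sqrt; last first.
  rewrite ltr0z; apply: le_lt_trans T.
  by apply: addr_ge0; apply: sumr_ge0 => i _; apply: sqr_ge0.
by rewrite ltr_int.
Qed.

Theorem mainTheorem10 (R : rcfType) (p q : nat) (a b : seq int) :
  (1 <= p)%N -> (p <= q)%N -> size a = p -> size b = q ->
  dominant (a, b) ->
  dominant (wsub (a, b) (beta p q)) ->
  (q.+1)%:Z <= nth 0 a 0 ->
  (p.+1)%:Z <= nth 0 b 0 ->
  (forall tau : weight, in_Omega p q tau ->
     gg (brace (wsub (a, b) tau)) (brace (wsub (wsub (a, b) tau) (beta p q))))
  /\ spin_norm R p q (wsub (a, b) (beta p q)) < spin_norm R p q (a, b).
Proof.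
move=> Hp Hpq Ha Hb _ _ Ha1 Hb1.
have Hq : (0 < q)%N by apply: leq_trans Hpq.
have key : forall tau, in_Omega p q tau ->
  gg (brace (wsub (a, b) tau)) (brace (wsub (wsub (a, b) tau) (beta p q))) /\
  knorm R p q (wsub (wsub (a, b) tau) (beta p q)) < knorm R p q (wsub (a, b) tau).
  move=> tau [Hs Hsort Hall Hy].
  have [A1 A2] := blockA p q a tau.1 Hp Ha Hs Ha1 Hall.
  have [B1 B2] := blockB p q b tau.1 Hp Hpq Hb Hs Hb1.
  rewrite -Hy in B1 B2.
  exact: (knorm_gg R p q (vsub a tau.1) (vsub b tau.2) Hp Hq A1 A2 B1 B2).
split; first by move=> tau /key [].
have [tau [Htau HS]] : exists tau, (tau = tau0 p q \/ exists x : p.-tuple 'I_q.+1,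
    sorted (fun a b : 'I_q.+1 => (b <= a)%N) x /\ tau = tau_of x) /\
    spin_norm R p q (a, b) = knorm R p q (wsub (a, b) tau).
  rewrite /spin_norm.
  apply: (big_ind (fun v => exists tau, (tau = tau0 p q \/ exists x : p.-tuple 'I_q.+1,
    sorted (fun a b : 'I_q.+1 => (b <= a)%N) x /\ tau = tau_of x) /\
    v = knorm R p q (wsub (a, b) tau))).
  - by exists (tau0 p q); split => //; left.
  - move=> u v [t1 [Ht1 ->]] [t2 [Ht2 ->]].
    case: (leP (knorm R p q (wsub (a, b) t1)) (knorm R p q (wsub (a, b) t2))) => h.
      by exists t1.
    by exists t2.
  - move=> x Hx; exists (tau_of x); split => //; right; by exists x.
have HO : in_Omega p q tau.
  by case: Htau => [->|[x [Hx ->]]]; [apply: Omega_tau0 | apply: Omega_tau_of].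
have Hle : spin_norm R p q (wsub (a, b) (beta p q)) <=
           knorm R p q (wsub (wsub (a, b) (beta p q)) tau).
  case: Htau => [->|[x [Hx ->]]]; rewrite /spin_norm.
    exact: bigmin_le_id.
  exact: bigmin_le_cond.
rewrite HS; apply: (le_lt_trans Hle); rewrite wsub_comm; exact: (key tau HO).2.
Qed.
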